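(* Let $\mathcal{T}$ be the scheme on $\mathcal{M}$ given by $$\mathcal{T}(\mathbf{p})_{2i}=M_{15/16}\big(p_{i-1},\,M_{1/3}(p_i,p_{i+1})\big),\qquad \mathcal{T}(\mathbf{p})_{2i+1}=M_{15/16}\big(p_{i+2},\,M_{2/3}(p_i,p_{i+1})\big),\quad i\in\mathbb{Z}.$$ Then $\delta(\mathcal{T}(\mathbf{p}))\le\tfrac56\,\delta(\mathbf{p})$ for all manifold data $\mathbf{p}$, and $\mathcal{T}$ is convergent.
   Context: $\mathcal{M}$ is a geodesically complete connected Riemannian manifold with distance $d$. For $p_0,p_1\in\mathcal{M}$ a minimal geodesic $\gamma:[0,1]\to\mathcal{M}$ from $p_0$ to $p_1$ is fixed and $M_t(p_0,p_1)=\gamma(t)$, $t\in[0,1]$, so all $M_t(p_0,p_1)$ lie on the same geodesic, $d(p_0,M_t(p_0,p_1))=t\,d(p_0,p_1)$, $d(M_t(p_0,p_1),p_1)=(1-t)d(p_0,p_1)$ and $d(M_s(p_0,p_1),M_t(p_0,p_1))=|s-t|d(p_0,p_1)$. Data $\mathbf{p}=(p_i)_{i\in\mathbb{Z}}$ with $\delta(\mathbf{p})=\sup_id(p_i,p_{i+1})<\infty$. This is the geodesic-inductive-mean adaptation of the linear quartic B-spline scheme with mask $\frac1{16}(1,5,10,10,5,1)$. Convergence: for every data $\mathbf{p}$ the curves $\mathrm{PG}_k(\mathcal{T}^k(\mathbf{p}))$ converge uniformly on $\mathbb{R}$, where $\mathrm{PG}_k(\mathbf{q})(t)=M_{2^kt-n}(q_n,q_{n+1})$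 for $t\in[2^{-k}n,2^{-k}(n+1))$. *)

(* Defs.v *)
From Stdlib Require Import Reals Lra ZArith.
Open Scope R_scope.

(* Abstract setting: a complete metric space (X,d) with a fixed choice of
   geodesic means M t p0 p1 = gamma(t), gamma a fixed minimal geodesic
   from p0 to p1, satisfying the distance identities of the context for
   t in [0,1].  (A geodesically complete connected Riemannian manifold
   is such a space by Hopf--Rinow.) *)
Record geodesic_mean_space (X : Type) (d : X -> X -> R)
    (M : R -> X -> X -> X) : Prop := {
  gms_nonneg : forall x y, 0 <= d x y;
  gms_sep : forall x y, d x y = 0 <-> x = y;
  gms_sym : forall x y, d x y = d y x;
  gms_tri : forall x y z, d x z <= d x y + d y z;
  gms_complete : forall u : nat -> X,
      (forall eps, eps > 0 -> exists N, forall n m, (n >= N)%nat -> (m >= N)%nat ->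
          d (u n) (u m) < eps) ->
      exists l, forall eps, eps > 0 -> exists N, forall n, (n >= N)%nat -> d (u n) l < eps;
  gms_left : forall t p0 p1, 0 <= t <= 1 -> d p0 (M t p0 p1) = t * d p0 p1;
  gms_right : forall t p0 p1, 0 <= t <= 1 -> d (M t p0 p1) p1 = (1 - t) * d p0 p1;
  gms_between : forall s t p0 p1, 0 <= s <= 1 -> 0 <= t <= 1 ->
      d (M s p0 p1) (M t p0 p1) = Rabs (s - t) * d p0 p1
}.

Definition dist_set {X : Type} (d : X -> X -> R) (p : Z -> X) : R -> Prop :=
  fun r => exists i : Z, r = d (p i) (p (i + 1)%Z).

Definition scheme_T {X : Type} (M : R -> X -> X -> X) (p : Z -> X) : Z -> X :=
  fun j =>
    let i := Z.div j 2 in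
    if Z.even j
    then M (15/16) (p (i - 1)%Z) (M (1/3) (p i) (p (i + 1)%Z))
    else M (15/16) (p (i + 2)%Z) (M (2/3) (p i) (p (i + 1)%Z)).

Definition floorR (x : R) : Z := (up x - 1)%Z.

Definition PG {X : Type} (M : R -> X -> X -> X) (k : nat) (q : Z -> X) (t : R) : X :=
  let s := 2 ^ k * t in
  let n := floorR s in
  M (s - IZR n) (q n) (q (n + 1)%Z).

(* Main.v *)
Require Import Defs.
From Stdlib Require Import Reals ZArith Lra Lia ClassicalEpsilon.
Open Scope R_scope.

Lemma sT_even X (M:R->X->X->X) q i :
  scheme_T M q (2*i)%Z = M (15/16) (q (i-1)%Z) (M (1/3) (q i) (q (i+1)%Z)).
Proof.
  unfold scheme_T.
  assert (E : ((2*i)/2 = i)%Z) by (symmetry; apply Z.div_unique with 0%Z; lia).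
  rewrite E, Z.even_mul. simpl. reflexivity.
Qed.

Lemma sT_odd X (M:R->X->X->X) q i :
  scheme_T M q (2*i+1)%Z = M (15/16) (q (i+2)%Z) (M (2/3) (q i) (q (i+1)%Z)).
Proof.
  unfold scheme_T.
  assert (E : ((2*i+1)/2 = i)%Z) by (symmetry; apply Z.div_unique with 1%Z; lia).
  rewrite E, Z.even_add, Z.even_mul. simpl. reflexivity.
Qed.

Lemma Z_parity j : exists i, j = (2*i)%Z \/ j = (2*i+1)%Z.
Proof.
  exists (j/2)%Z. pose proof (Z.div_mod j 2). pose proof (Z.mod_pos_bound j 2). lia.
Qed.


Lemma step_bound X d M (HX: geodesic_mean_space X d M) q D :
  (forall i, d (q i) (q (i+1)%Z) <= D) ->
  forall j, d (scheme_T M q j) (scheme_T M q (j+1)%Z) <= 5/6 * D.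
Proof.
  intros H j.
  pose proof (gms_tri _ _ _ HX) as T.
  pose proof (gms_sym _ _ _ HX) as S.
  assert (L : forall t a b, 0 <= t <= 1 -> d a (M t a b) = t * d a b) by (apply (gms_left _ _ _ HX)).
  assert (Rg : forall t a b, 0 <= t <= 1 -> d (M t a b) b = (1-t) * d a b) by (apply (gms_right _ _ _ HX)).
  assert (Bt := gms_between _ _ _ HX).
  destruct (Z_parity j) as [i [-> | ->]].
  - replace (2*i+1)%Z with (2*i+1)%Z by ring. rewrite sT_even, sT_odd.
    set (A := M (1/3) (q i) (q (i+1)%Z)). set (B := M (2/3) (q i) (q (i+1)%Z)).
    pose proof (T (M (15/16) (q (i-1)%Z) A) A (M (15/16) (q (i+2)%Z) B)).
    pose proof (T A B (M (15/16) (q (i+2)%Z) B)).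
    pose proof (Rg (15/16) (q (i-1)%Z) A ltac:(lra)).
    pose proof (T (q (i-1)%Z) (q i) A).
    pose proof (L (1/3) (q i) (q (i+1)%Z) ltac:(lra)).
    pose proof (H (i-1)%Z) as Ha. replace (i-1+1)%Z with i in Ha by ring.
    pose proof (H i).
    pose proof (H (i+1)%Z) as Hb. replace (i+1+1)%Z with (i+2)%Z in Hb by ring.
    pose proof (Bt (1/3) (2/3) (q i) (q (i+1)%Z) ltac:(lra) ltac:(lra)) as HB.
    replace (Rabs (1/3-2/3)) with (1/3) in HB by (rewrite Rabs_left by lra; lra).
    rewrite (S B (M (15/16) (q (i+2)%Z) B)) in *.
    pose proof (Rg (15/16) (q (i+2)%Z) B ltac:(lra)).
    pose proof (T (q (i+2)%Z) (q (i+1)%Z) B).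
    rewrite (S (q (i+2)%Z) (q (i+1)%Z)) in *.
    pose proof (Rg (2/3) (q i) (q (i+1)%Z) ltac:(lra)).
    rewrite (S (q (i+1)%Z) B) in *.
    repeat match goal with Hx : context[M (1/3) (q i) (q (i+1)%Z)] |- _ => change (M (1/3) (q i) (q (i+1)%Z)) with A in Hx end.
    repeat match goal with Hx : context[M (2/3) (q i) (q (i+1)%Z)] |- _ => change (M (2/3) (q i) (q (i+1)%Z)) with B in Hx end.
    clearbody A B. pose proof (gms_nonneg _ _ _ HX (q i) (q (i+1)%Z)). clear T S L Rg Bt H HX. lra.
  - replace (2*i+1+1)%Z with (2*(i+1))%Z by ring. rewrite sT_even, sT_odd.
    replace (i+1-1)%Z with i by ring. replace (i+1+1)%Z with (i+2)%Z by ring.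
    set (C := M (1/3) (q (i+1)%Z) (q (i+2)%Z)). set (B := M (2/3) (q i) (q (i+1)%Z)).
    set (T1 := M (15/16) (q (i+2)%Z) B). set (T2 := M (15/16) (q i) C).
    pose proof (T T1 B T2). pose proof (T B (q (i+1)%Z) T2).
    pose proof (T (q (i+1)%Z) C T2).
    pose proof (Rg (15/16) (q (i+2)%Z) B ltac:(lra)).
    pose proof (T (q (i+2)%Z) (q (i+1)%Z) B).
    pose proof (Rg (2/3) (q i) (q (i+1)%Z) ltac:(lra)).
    pose proof (Rg (15/16) (q i) C ltac:(lra)).
    pose proof (T (q i) (q (i+1)%Z) C).
    pose proof (L (1/3) (q (i+1)%Z) (q (i+2)%Z) ltac:(lra)).
    pose proof (H i).
    pose proof (H (i+1)%Z) as Hb. replace (i+1+1)%Z with (i+2)%Z in Hb by ring.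
    rewrite (S (q (i+2)%Z) (q (i+1)%Z)) in *.
    rewrite (S (q (i+1)%Z) B) in *.
    rewrite (S C T2) in *.
    repeat match goal with Hx : context[M (1/3) (q (i+1)%Z) (q (i+2)%Z)] |- _ => change (M (1/3) (q (i+1)%Z) (q (i+2)%Z)) with C in Hx end.
    repeat match goal with Hx : context[M (2/3) (q i) (q (i+1)%Z)] |- _ => change (M (2/3) (q i) (q (i+1)%Z)) with B in Hx end.
    repeat match goal with Hx : context[M (15/16) (q (i+2)%Z) B] |- _ => change (M (15/16) (q (i+2)%Z) B) with T1 in Hx end.
    repeat match goal with Hx : context[M (15/16) (q i) C] |- _ => change (M (15/16) (q i) C) with T2 in Hx end.
    clearbody T1 T2 B C. pose proof (gms_nonneg _ _ _ HX (q i) (q (i+1)%Z)). clear T S L Rg Bt H HX. lra.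
Qed.

Lemma floor_spec x : IZR (floorR x) <= x < IZR (floorR x) + 1.
Proof. unfold floorR. rewrite minus_IZR. destruct (archimed x). lra. Qed.

Lemma floor_unique x m : IZR m <= x < IZR m + 1 -> floorR x = m.
Proof.
  intros Hm. unfold floorR. rewrite <- (tech_up x (m+1)); [lia| |];
  rewrite plus_IZR; lra.
Qed.

Lemma floor_double x : floorR (2*x) = (2*floorR x)%Z \/ floorR (2*x) = (2*floorR x+1)%Z.
Proof.
  destruct (floor_spec x) as [H1 H2].
  destruct (Rlt_or_le (2*x) (2*IZR (floorR x) + 1)).
  - left. apply floor_unique. rewrite mult_IZR. lra.
  - right. apply floor_unique. rewrite plus_IZR, mult_IZR. lra.
Qed.

Lemma PG_near X d M (HX: geodesic_mean_space X d M) k q D t :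
  (forall i, d (q i) (q (i+1)%Z) <= D) ->
  d (PG M k q t) (q (floorR (2^k*t))) <= D.
Proof.
  intros H. unfold PG.
  set (s := 2^k*t). set (n := floorR s).
  destruct (floor_spec s) as [H1 H2]. fold n in H1, H2.
  rewrite (gms_sym _ _ _ HX).
  rewrite (gms_left _ _ _ HX) by lra.
  pose proof (H n). pose proof (gms_nonneg _ _ _ HX (q n) (q (n+1)%Z)).
  nra.
Qed.

Lemma T_near X d M (HX: geodesic_mean_space X d M) q D n :
  (forall i, d (q i) (q (i+1)%Z) <= D) ->
  d (scheme_T M q (2*n)%Z) (q n) <= D /\ d (scheme_T M q (2*n+1)%Z) (q n) <= D.
Proof.
  intros H.
  pose proof (gms_tri _ _ _ HX) as T.
  pose proof (gms_sym _ _ _ HX) as S.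
  assert (L : forall t a b, 0 <= t <= 1 -> d a (M t a b) = t * d a b) by (apply (gms_left _ _ _ HX)).
  assert (Rg : forall t a b, 0 <= t <= 1 -> d (M t a b) b = (1-t) * d a b) by (apply (gms_right _ _ _ HX)).
  rewrite sT_even, sT_odd.
  set (A := M (1/3) (q n) (q (n+1)%Z)). set (B := M (2/3) (q n) (q (n+1)%Z)).
  set (T0 := M (15/16) (q (n-1)%Z) A). set (T1 := M (15/16) (q (n+2)%Z) B).
  pose proof (T T0 A (q n)). pose proof (T T1 B (q n)).
  pose proof (Rg (15/16) (q (n-1)%Z) A ltac:(lra)).
  pose proof (Rg (15/16) (q (n+2)%Z) B ltac:(lra)).
  pose proof (T (q (n-1)%Z) (q n) A).
  pose proof (T (q (n+2)%Z) (q (n+1)%Z) B).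
  pose proof (L (1/3) (q n) (q (n+1)%Z) ltac:(lra)).
  pose proof (L (2/3) (q n) (q (n+1)%Z) ltac:(lra)).
  pose proof (Rg (2/3) (q n) (q (n+1)%Z) ltac:(lra)).
  pose proof (H (n-1)%Z) as Ha. replace (n-1+1)%Z with n in Ha by ring.
  pose proof (H n).
  pose proof (H (n+1)%Z) as Hb. replace (n+1+1)%Z with (n+2)%Z in Hb by ring.
  pose proof (gms_nonneg _ _ _ HX (q n) (q (n+1)%Z)).
  rewrite (S (q (n+2)%Z) (q (n+1)%Z)) in *.
  repeat match goal with Hx : context[M (1/3) (q n) (q (n+1)%Z)] |- _ => change (M (1/3) (q n) (q (n+1)%Z)) with A in Hx end.
  repeat match goal with Hx : context[M (2/3) (q n) (q (n+1)%Z)] |- _ => change (M (2/3) (q n) (q (n+1)%Z)) with B in Hx end.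
  repeat match goal with Hx : context[M (15/16) (q (n-1)%Z) A] |- _ => change (M (15/16) (q (n-1)%Z) A) with T0 in Hx end.
  repeat match goal with Hx : context[M (15/16) (q (n+2)%Z) B] |- _ => change (M (15/16) (q (n+2)%Z) B) with T1 in Hx end.
  clearbody A B T0 T1.
  rewrite (S (q n) A) in *. rewrite (S (q n) B) in *. rewrite (S (q (n+1)%Z) B) in *.
  clear T S L Rg H HX. split; lra.
Qed.

Lemma unif_conv X d M (HX: geodesic_mean_space X d M) (u : nat -> R -> X) C r :
  0 <= C -> 0 <= r < 1 -> (forall k t, d (u k t) (u (S k) t) <= C * r^k) ->
  exists F : R -> X, forall eps, eps>0 -> exists K, forall k, (k>=K)%nat -> forall t,
    d (u k t) (F t) < eps.
Proof.
  intros HC Hr Hs.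
  set (G := fun k => C * r^k / (1-r)).
  assert (G0 : forall k, 0 <= C * r^k / (1-r)).
  { intro k. unfold Rdiv. apply Rmult_le_pos. apply Rmult_le_pos; [lra|apply pow_le; lra].
    apply Rlt_le, Rinv_0_lt_compat; lra. }
  assert (tail : forall k j t, d (u k t) (u (k+j)%nat t) <= G k - C * r^(k+j) / (1-r)).
  { intros k j t. induction j.
    - replace (k+0)%nat with k by lia. rewrite (proj2 (gms_sep _ _ _ HX _ _) eq_refl).
      unfold G. lra.
    - replace (k + S j)%nat with (S (k+j)) by lia.
      pose proof (gms_tri _ _ _ HX (u k t) (u (k+j)%nat t) (u (S (k+j)) t)).
      pose proof (Hs (k+j)%nat t).
      assert (E : C * r^(k+j) / (1-r) - C * r^(S (k+j)) / (1-r) = C * r^(k+j)).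
      { simpl. field. lra. }
      lra. }
  assert (tail2 : forall k m t, (m >= k)%nat -> d (u k t) (u m t) <= G k).
  { intros k m t Hm. replace m with (k + (m-k))%nat by lia.
    pose proof (tail k (m-k)%nat t). pose proof (G0 (k+(m-k))%nat). lra. }
  assert (small : forall e, e > 0 -> exists K, forall n, (n >= K)%nat -> G n < e).
  { intros e He.
    destruct (pow_lt_1_zero r ltac:(rewrite Rabs_right; lra) (e*(1-r)/(C+1))) as [K HK].
    { apply Rdiv_lt_0_compat; [nra|lra]. }
    exists K. intros n Hn. specialize (HK n Hn).
    rewrite Rabs_right in HK by (apply Rle_ge, pow_le; lra).
    unfold G. set (a := r^n) in *.
    assert (0 <= a) by (apply pow_le; lra).
    assert (C*a < e*(1-r)).
    { assert (Hq : (C+1)*a < (C+1)*(e*(1-r)/(C+1))) by (apply Rmult_lt_compat_l; lra).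
      replace ((C+1)*(e*(1-r)/(C+1))) with (e*(1-r)) in Hq by (field; lra). nra. }
    apply (Rmult_lt_reg_r (1-r)); [lra|].
    replace (C*a/(1-r)*(1-r)) with (C*a) by (field; lra). lra. }
  assert (lim : forall t, exists l, forall eps, eps > 0 -> exists N, forall n, (n >= N)%nat -> d (u n t) l < eps).
  { intro t. apply (gms_complete _ _ _ HX).
    intros eps He. destruct (small (eps/2) ltac:(lra)) as [K HK].
    exists K. intros n m Hn Hm.
    pose proof (tail2 K n t Hn). pose proof (tail2 K m t Hm). pose proof (HK K (le_n K)).
    pose proof (gms_tri _ _ _ HX (u n t) (u K t) (u m t)).
    rewrite (gms_sym _ _ _ HX (u n t) (u K t)) in *. lra. }
  exists (fun t => proj1_sig (constructive_indefinite_description _ (lim t))).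
  intros eps He. destruct (small (eps/2) ltac:(lra)) as [K HK].
  exists K. intros k Hk t.
  destruct (constructive_indefinite_description _ (lim t)) as [l Hl]. simpl.
  destruct (Hl (eps/2) ltac:(lra)) as [N HN].
  pose proof (HN (Nat.max N k) ltac:(lia)).
  pose proof (tail2 k (Nat.max N k) t ltac:(lia)).
  pose proof (HK k Hk).
  pose proof (gms_tri _ _ _ HX (u k t) (u (Nat.max N k) t) l).
  lra.
Qed.

Theorem mainTheorem11 (X : Type) (d : X -> X -> R) (M : R -> X -> X -> X)
  (HX : geodesic_mean_space X d M) :
  forall (p : Z -> X) (delta : R),
    is_lub (dist_set d p) delta ->
    (exists deltaT : R,
        is_lub (dist_set d (scheme_T M p)) deltaT /\ deltaT <= 5/6 * delta) /\
    (exists F : R -> X,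
        forall eps : R, eps > 0 ->
        exists K : nat, forall k : nat, (k >= K)%nat -> forall t : R,
          d (PG M k (Nat.iter k (scheme_T M) p) t) (F t) < eps).
Proof.
  intros p delta [Hub Hlub].
  assert (H0 : forall i, d (p i) (p (i+1)%Z) <= delta).
  { intro i. apply Hub. exists i. reflexivity. }
  assert (Hd : 0 <= delta).
  { pose proof (H0 0%Z). pose proof (gms_nonneg _ _ _ HX (p 0%Z) (p (0+1)%Z)). lra. }
  split.
  - assert (Hs := step_bound X d M HX p delta H0).
    destruct (completeness (dist_set d (scheme_T M p))) as [m Hm].
    + exists (5/6*delta). intros r [j ->]. apply Hs.
    + exists (d (scheme_T M p 0%Z) (scheme_T M p (0+1)%Z)). exists 0%Z. reflexivity.
    + exists m. split; [exact Hm|]. apply (proj2 Hm). intros r [j ->]. apply Hs.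
  - assert (Hk : forall k i, d (Nat.iter k (scheme_T M) p i) (Nat.iter k (scheme_T M) p (i+1)%Z)
                 <= (5/6)^k * delta).
    { induction k; intro i.
      - simpl. rewrite Rmult_1_l. apply H0.
      - simpl Nat.iter. replace ((5/6)^S k * delta) with (5/6 * ((5/6)^k*delta)) by (simpl; ring).
        apply step_bound; auto. }
    apply (unif_conv X d M HX (fun k t => PG M k (Nat.iter k (scheme_T M) p) t) (3*delta) (5/6));
      [lra|lra|].
    intros k t. simpl.
    set (q := Nat.iter k (scheme_T M) p).
    assert (Hq := Hk k). fold q in Hq.
    pose proof (PG_near X d M HX k q _ t Hq) as A1.
    pose proof (PG_near X d M HX (S k) (scheme_T M q) _ t (step_bound X d M HX q _ Hq)) as A2.
    replace (2^S k * t) with (2*(2^k*t)) in A2 by (simpl; ring).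
    pose proof (T_near X d M HX q _ (floorR (2^k*t)) Hq) as [A3 A4].
    pose proof (gms_tri _ _ _ HX (PG M k q t) (q (floorR (2^k*t))) (PG M (S k) (scheme_T M q) t)).
    pose proof (gms_tri _ _ _ HX (q (floorR (2^k*t))) (scheme_T M q (floorR (2*(2^k*t)))) (PG M (S k) (scheme_T M q) t)).
    rewrite (gms_sym _ _ _ HX (q (floorR (2^k*t))) (scheme_T M q _)) in *.
    assert (0 <= (5/6)^k * delta) by (apply Rmult_le_pos; [apply pow_le|]; lra).
    destruct (floor_double (2^k*t)) as [E|E]; rewrite E in *; rewrite (gms_sym _ _ _ HX (PG M (S k) _ t)) in A2; nra.
Qed.
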